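(* Let $X$ be a topological space and $k$ a complete non-Archimedean valued field. Then $\mathrm{BSC}_k(X)$, together with the evaluation map $\iota_k:X\to\mathrm{BSC}_k(X)$, $\iota_k(x)=(f\mapsto|f(x)|)$, is a universal totally disconnected Hausdorff compactification of $X$: $\mathrm{BSC}_k(X)$ is a totally disconnected compact Hausdorff space, $\iota_k(X)$ is dense, and for every totally disconnected compact Hausdorff space $Y$ and continuous map $f:X\to Y$ there is a unique continuous map $g:\mathrm{BSC}_k(X)\to Y$ with $f=g\circ\iota_k$. In particular, up to homeomorphism compatible with the evaluation maps, $\mathrm{BSC}_k(X)$ does not depend on $k$.
   Context: $k$ is a field complete with respect to a non-Archimedean absolute value of rank one (possibly trivial). $C_{bd}(X,k)$ is the $k$-algebra of bounded continuous functions $X\to k$ with the supremum norm. $\mathrm{BSC}_k(X)$ is the Berkovich spectrum $\mathcal M_k(C_{bd}(X,k))$: the set of multiplicative seminorms $f\mapsto|f|_x$ on $C_{bd}(X,k)$ extending the absolute value of $k$ and bounded by the supremum norm, with the weakest topology making all $x\mapsto|f|_x$ continuous. *)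

(* Defs.v *)
From Stdlib Require Import Reals Lra List.
From mathcomp Require Import ssreflect ssrfun ssrbool eqtype ssralg.
Local Open Scope R_scope.

Definition t_is_topology {X : Type} (O : (X -> Prop) -> Prop) : Prop :=
  O (fun _ => True) /\
  (forall U V, O U -> O V -> O (fun x => U x /\ V x)) /\
  (forall F : (X -> Prop) -> Prop, (forall U, F U -> O U) ->
      O (fun x => exists U, F U /\ U x)).

Definition t_continuous {X Y : Type} (OX : (X -> Prop) -> Prop)
  (OY : (Y -> Prop) -> Prop) (f : X -> Y) : Prop :=
  forall V, OY V -> OX (fun x => V (f x)).

Definition t_compact {X : Type} (O : (X -> Prop) -> Prop) : Prop :=
  forall F : (X -> Prop) -> Prop,
    (forall U, F U -> O U) -> (forall x, exists U, F U /\ U x) ->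
    exists l : list (X -> Prop),
      (forall U, In U l -> F U) /\ (forall x, exists U, In U l /\ U x).

Definition t_hausdorff {X : Type} (O : (X -> Prop) -> Prop) : Prop :=
  forall x y : X, x <> y ->
    exists U V, O U /\ O V /\ U x /\ V y /\ (forall z, ~ (U z /\ V z)).

Definition t_connected_subset {X : Type} (O : (X -> Prop) -> Prop)
  (S : X -> Prop) : Prop :=
  ~ exists U V, O U /\ O V /\ (forall x, S x -> U x \/ V x) /\
      (exists x, S x /\ U x) /\ (exists x, S x /\ V x) /\
      (forall x, S x -> U x -> V x -> False).

Definition t_totally_disconnected {X : Type} (O : (X -> Prop) -> Prop) : Prop :=
  forall S, t_connected_subset O S -> forall x y, S x -> S y -> x = y.

Definition t_dense {X : Type} (O : (X -> Prop) -> Prop) (D : X -> Prop) : Prop :=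
  forall U, O U -> (exists y, U y) -> exists y, U y /\ D y.

Definition t_homeomorphism {X Y : Type} (OX : (X -> Prop) -> Prop)
  (OY : (Y -> Prop) -> Prop) (h : X -> Y) : Prop :=
  exists h' : Y -> X, t_continuous OX OY h /\ t_continuous OY OX h' /\
    (forall x, h' (h x) = x) /\ (forall y, h (h' y) = y).

Definition generated_topology {X : Type} (S : (X -> Prop) -> Prop)
  (U : X -> Prop) : Prop :=
  forall O : (X -> Prop) -> Prop, t_is_topology O -> (forall V, S V -> O V) -> O U.

Definition nonarch_abs {k : fieldType} (a : k -> R) : Prop :=
  (forall x, 0 <= a x) /\
  (forall x, a x = 0 <-> x = GRing.zero) /\
  (forall x y, a (GRing.mul x y) = a x * a y) /\
  (forall x y, a (GRing.add x y) <= Rmax (a x) (a y)).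

Definition kdist {k : fieldType} (a : k -> R) (x y : k) : R :=
  a (GRing.add x (GRing.opp y)).

Definition complete_abs {k : fieldType} (a : k -> R) : Prop :=
  forall u : nat -> k,
    (forall eps, 0 < eps -> exists N, forall m n, (N <= m)%nat -> (N <= n)%nat ->
        kdist a (u m) (u n) < eps) ->
    exists l : k, forall eps, 0 < eps -> exists N, forall n, (N <= n)%nat ->
        kdist a (u n) l < eps.

Definition complete_nonarch_field {k : fieldType} (a : k -> R) : Prop :=
  nonarch_abs a /\ complete_abs a.

Definition k_open {k : fieldType} (a : k -> R) (U : k -> Prop) : Prop :=
  forall x, U x -> exists eps, 0 < eps /\ (forall y, kdist a y x < eps -> U y).

Definition bounded_continuous {X : Type} (OX : (X -> Prop) -> Prop)
  {k : fieldType} (a : k -> R) (f : X -> k) : Prop :=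
  t_continuous OX (k_open a) f /\ exists C, forall x, a (f x) <= C.

Definition Cbd {X : Type} (OX : (X -> Prop) -> Prop) {k : fieldType}
  (a : k -> R) : Type := { f : X -> k | bounded_continuous OX a f }.

(* Multiplicative seminorms on C_bd(X,k) extending |.| of k and bounded by the
   supremum norm (the sup-norm bound is written as: nu f <= C for every bound
   C of |f| on X, i.e. nu f <= sup_x |f x|). *)
Definition bounded_mult_seminorm {X : Type} (OX : (X -> Prop) -> Prop)
  {k : fieldType} (a : k -> R) (nu : Cbd OX a -> R) : Prop :=
  (forall f, 0 <= nu f) /\
  (forall f g h : Cbd OX a,
      (forall x, proj1_sig h x = GRing.add (proj1_sig f x) (proj1_sig g x)) ->
      nu h <= nu f + nu g) /\
  (forall f g h : Cbd OX a,
      (forall x, proj1_sig h x = GRing.mul (proj1_sig f x) (proj1_sig g x)) ->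
      nu h = nu f * nu g) /\
  (forall (c : k) (h : Cbd OX a), (forall x, proj1_sig h x = c) -> nu h = a c) /\
  (forall (h : Cbd OX a) C, (forall x, a (proj1_sig h x) <= C) -> nu h <= C).

Definition BSC {X : Type} (OX : (X -> Prop) -> Prop) {k : fieldType}
  (a : k -> R) : Type :=
  { nu : Cbd OX a -> R | bounded_mult_seminorm OX a nu }.

Definition BSC_open {X : Type} (OX : (X -> Prop) -> Prop) {k : fieldType}
  (a : k -> R) : (BSC OX a -> Prop) -> Prop :=
  generated_topology (fun V : BSC OX a -> Prop =>
    exists (f : Cbd OX a) (W : R -> Prop), Rtopology.open_set W /\
      forall p, V p <-> W (proj1_sig p f)).

Lemma eval_seminorm {X : Type} (OX : (X -> Prop) -> Prop) {k : fieldType}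
  (a : k -> R) (Ha : nonarch_abs a) (x : X) :
  bounded_mult_seminorm OX a (fun f => a (proj1_sig f x)).
Proof.
  destruct Ha as [H0 [_ [Hm Hu]]].
  split; [intro f; apply H0|].
  split; [intros f g h E; rewrite E;
          specialize (Hu (proj1_sig f x) (proj1_sig g x));
          pose proof (H0 (proj1_sig f x)); pose proof (H0 (proj1_sig g x));
          unfold Rmax in Hu; destruct Rle_dec in Hu; lra|].
  split; [intros f g h E; rewrite E; apply Hm|].
  split; [intros c h E; rewrite E; reflexivity|].
  intros h C HC; apply HC.
Qed.

Definition iota {X : Type} (OX : (X -> Prop) -> Prop) {k : fieldType}
  (a : k -> R) (Ha : nonarch_abs a) (x : X) : BSC OX a :=
  exist _ (fun f => a (proj1_sig f x)) (eval_seminorm OX a Ha x).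

(* Main.v *)
Require Import Defs.
From Stdlib Require Import Reals List Lra.
From Stdlib Require Import Classical ClassicalEpsilon FunctionalExtensionality PropExtensionality ProofIrrelevance.
From mathcomp Require Import ssreflect ssrfun ssrbool eqtype ssralg.
Local Open Scope R_scope.
Set Implicit Arguments.
Unset Strict Implicit.

Module UF.
From mathcomp Require Import boolp classical_sets filter.
Lemma uf_lemma (T : Type) (F : (T -> Prop) -> Prop) :
  F (fun _ => True) ->
  (forall A B, F A -> F B -> F (fun x => A x /\ B x)) ->
  (forall A B : T -> Prop, (forall x, A x -> B x) -> F A -> F B) ->
  ~ F (fun _ => False) ->
  exists G : (T->Prop)->Prop, (forall A, F A -> G A) /\
    (forall A B, G A -> G B -> G (fun x => A x /\ B x)) /\
    (forall A B : T -> Prop, (forall x, A x -> B x) -> G A -> G B) /\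
    ~ G (fun _ => False) /\ (forall A, G A \/ G (fun x => ~ A x)).
Proof.
move=> FT FI FS F0.
have PF : ProperFilter F.
  split; first exact: F0.
  split; [exact: FT | move=> A B; exact: FI | exact: FS].
have [G [UG FG]] := ultraFilterLemma PF.
exists G; split; first exact: FG.
split; first by move=> A B; apply: filterI.
split; first by move=> A B; apply: filterS.
split; first exact: (@filter_not_empty _ G _).
move=> A; exact: (in_ultra_setVsetC A UG).
Qed.
End UF.

Module KAlg.
From mathcomp Require Import ring.
Section A.
Variable k : fieldType.
Lemma id1 (z y : k) : z = GRing.add y (GRing.add z (GRing.opp y)).
Proof. ring. Qed.
Lemma id2 (z y : k) : GRing.add (GRing.add y (GRing.add z (GRing.opp y))) (GRing.opp y) = GRing.add z (GRing.opp y).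
Proof. ring. Qed.
Lemma id3 (z y : k) : GRing.add y (GRing.opp z) = GRing.opp (GRing.add z (GRing.opp y)).
Proof. ring. Qed.
Lemma inv_diff (z y : k) : z <> GRing.zero -> y <> GRing.zero ->
  GRing.add ((@GRing.inv k) z) (GRing.opp ((@GRing.inv k) y)) =
  GRing.mul (GRing.add y (GRing.opp z)) (GRing.mul ((@GRing.inv k) z) ((@GRing.inv k) y)).
Proof.
move=> hz hy. have hz' : z != GRing.zero by apply/eqP. have hy' : y != GRing.zero by apply/eqP.
field. by rewrite hz' hy'.
Qed.
End A.
End KAlg.

Section Val.
Variables (k : fieldType) (a : k -> R) (Ha : nonarch_abs a).

Lemma a_ge0 x : 0 <= a x.
Proof. exact: (proj1 Ha x). Qed.

Lemma a_eq0 x : a x = 0 <-> x = GRing.zero.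
Proof. exact: (proj1 (proj2 Ha) x). Qed.

Lemma a_mul x y : a (GRing.mul x y) = a x * a y.
Proof. exact: (proj1 (proj2 (proj2 Ha)) x y). Qed.

Lemma a_add x y : a (GRing.add x y) <= Rmax (a x) (a y).
Proof. exact: (proj2 (proj2 (proj2 Ha)) x y). Qed.

Lemma a0 : a GRing.zero = 0.
Proof. by apply a_eq0. Qed.

Lemma a1 : a (GRing.one k) = 1.
Proof.
have h := a_mul (GRing.one k) (GRing.one k).
rewrite GRing.mulr1 in h.
have nz : a (GRing.one k) <> 0.
  move=> /a_eq0 H. have := @GRing.oner_neq0 k. by rewrite H eqxx.
have := a_ge0 (GRing.one k). nra.
Qed.

Lemma aN x : a (GRing.opp x) = a x.
Proof.
have h := a_mul (GRing.opp (GRing.one k)) (GRing.opp (GRing.one k)).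
rewrite GRing.mulrNN GRing.mulr1 a1 in h.
have h2 : a (GRing.opp (GRing.one k)) = 1 by have := a_ge0 (GRing.opp (GRing.one k)); nra.
have -> : GRing.opp x = GRing.mul (GRing.opp (GRing.one k)) x by rewrite GRing.mulN1r.
by rewrite a_mul h2 Rmult_1_l.
Qed.

Lemma a_le_max z y : a z <= Rmax (a y) (a (GRing.add z (GRing.opp y))).
Proof.
have h := a_add y (GRing.add z (GRing.opp y)). rewrite -KAlg.id1 in h. exact h.
Qed.

Lemma a_diff z y : Rabs (a z - a y) <= a (GRing.add z (GRing.opp y)).
Proof.
have h1 := a_le_max z y. have h2 := a_le_max y z.
have e := KAlg.id3 z y.
rewrite e aN in h2.
have h3 := a_ge0 (GRing.add z (GRing.opp y)). have h4 := a_ge0 y. have h5 := a_ge0 z.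
unfold Rmax in *; destruct Rle_dec in h1; destruct Rle_dec in h2; apply Rabs_le; split; lra.
Qed.

Lemma a_iso z y : a (GRing.add z (GRing.opp y)) < a y -> a z = a y.
Proof.
move=> H.
have h1 := a_le_max z y. have h2 := a_le_max y z.
have e := KAlg.id3 z y.
rewrite e aN in h2.
pose d := a (GRing.add z (GRing.opp y)); change (a (GRing.add z (GRing.opp y))) with d in H. change (a (GRing.add z (GRing.opp y))) with d in h1. change (a (GRing.add z (GRing.opp y))) with d in h2.
unfold Rmax in *; destruct Rle_dec in h1; destruct Rle_dec in h2; lra.
Qed.

Lemma a_inv x : x <> GRing.zero -> a ((@GRing.inv k) x) = / a x.
Proof.
move=> nz.
have h : GRing.mul ((@GRing.inv k) x) x = (GRing.one k) by apply: GRing.mulVf; apply/eqP.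
have := a_mul ((@GRing.inv k) x) x. rewrite h a1 => h'.
have ax : a x <> 0 by move=> /a_eq0.
field_simplify_eq; [lra| exact ax] || (rewrite h'; field; exact ax).
Qed.

End Val.

Lemma open_ball (W : R -> Prop) t : Rtopology.open_set W -> W t ->
  exists e, 0 < e /\ forall u, Rabs (u - t) < e -> W u.
Proof.
move=> HW Wt. have [d Hd] := HW t Wt. exists d; split; [exact: cond_pos|].
move=> u hu. by apply: Hd.
Qed.

Lemma ball_open (W : R -> Prop) :
  (forall t, W t -> exists e, 0 < e /\ forall u, Rabs (u - t) < e -> W u) ->
  Rtopology.open_set W.
Proof.
move=> H t Wt. have [e [he He]] := H t Wt.
exists (mkposreal e he). move=> u hu. by apply: He.
Qed.

Section KTop.
Variables (k : fieldType) (a : k -> R) (Ha : nonarch_abs a).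

Lemma kd_ge0 y x : 0 <= kdist a y x.
Proof. exact: (a_ge0 Ha). Qed.
Lemma kd_max z y : a z <= Rmax (a y) (kdist a z y).
Proof. exact: (a_le_max Ha). Qed.
Lemma kd_iso z y : kdist a z y < a y -> a z = a y.
Proof. exact: (a_iso Ha). Qed.
Lemma kd_diff z y : Rabs (a z - a y) <= kdist a z y.
Proof. exact: (a_diff Ha). Qed.

Lemma kopen_lt s : 0 < s -> k_open a (fun y => a y < s).
Proof.
move=> hs y hy. exists s; split => // z hz.
have := kd_max z y. unfold Rmax; destruct Rle_dec; lra.
Qed.

Lemma kopen_le s : 0 < s -> k_open a (fun y => a y <= s).
Proof.
move=> hs y hy. exists s; split => // z hz.
have := kd_max z y. unfold Rmax; destruct Rle_dec; lra.
Qed.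

Lemma kopen_gt s : k_open a (fun y => s < a y).
Proof.
move=> y hy. case: (Rlt_dec 0 (a y)) => h0.
- exists (a y); split => // z hz. by rewrite (kd_iso hz).
- have := a_ge0 Ha y => h1. exists 1; split; [lra|] => z _.
  have := a_ge0 Ha z. lra.
Qed.

Lemma kopen_ge s : 0 < s -> k_open a (fun y => s <= a y).
Proof.
move=> hs y hy. exists (a y); split; [lra|] => z hz. by rewrite (kd_iso hz).
Qed.

Lemma kopen_ngt s : s < 0 \/ 0 < s -> k_open a (fun y => ~ s < a y).
Proof.
case=> hs y hy.
- have := a_ge0 Ha y. lra.
- exists s; split => // z hz.
  have := kd_max z y. unfold Rmax; destruct Rle_dec; lra.
Qed.

Lemma kopen_nge s : 0 < s -> k_open a (fun y => ~ s <= a y).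
Proof.
move=> hs y hy. exists s; split => // z hz.
have := kd_max z y. unfold Rmax; destruct Rle_dec; lra.
Qed.

Lemma kopen_aW (W : R -> Prop) : Rtopology.open_set W -> k_open a (fun y => W (a y)).
Proof.
move=> HW y hy. have [e [he He]] := open_ball HW hy.
exists e; split => // z hz. apply: He. have := kd_diff z y. lra.
Qed.

Lemma kopen_const (P : Prop) : k_open a (fun _ => P).
Proof. move=> y hy. exists 1; split => //; lra. Qed.

Lemma kopen_inv s (U : k -> Prop) : 0 < s -> k_open a U ->
  k_open a (fun y => s <= a y /\ U ((@GRing.inv k) y)).
Proof.
move=> hs HU y [hy Uy]. have [e [he He]] := HU _ Uy.
exists (Rmin s (e * s * s)). split.
  apply: Rmin_pos => //. apply: Rmult_lt_0_compat => //. nra.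
move=> z hz. have hz1 : kdist a z y < s by have := Rmin_l s (e*s*s); lra.
have hz2 : kdist a z y < e * s * s by have := Rmin_r s (e*s*s); lra.
have eq : a z = a y by apply: kd_iso; lra.
split; first lra.
apply: He.
have ynz : y <> GRing.zero by move=> /(a_eq0 Ha); lra.
have znz : z <> GRing.zero by move=> /(a_eq0 Ha); lra.
rewrite /kdist (KAlg.inv_diff znz ynz) (a_mul Ha) (a_mul Ha) (a_inv Ha znz) (a_inv Ha ynz).
have e2 := KAlg.id3 z y.
rewrite e2 (aN Ha). change (a (GRing.add z (GRing.opp y))) with (kdist a z y).
rewrite eq.
have hd := kd_ge0 z y.
have hay : 0 < a y by lra.
have : kdist a z y * (/ a y * / a y) <= kdist a z y * (/ s * / s).
  apply: Rmult_le_compat_l => //. apply: Rmult_le_compat; try (left; apply Rinv_0_lt_compat; lra);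
  apply: Rinv_le_contravar => //.
have : kdist a z y * (/ s * / s) < e.
  have -> : e = (e * s * s) * (/ s * / s) by field; lra.
  apply: Rmult_lt_compat_r => //. apply: Rmult_lt_0_compat; apply: Rinv_0_lt_compat; lra.
lra.
Qed.
End KTop.

Lemma set_ext (T : Type) (U V : T -> Prop) : (forall x, U x <-> V x) -> U = V.
Proof. move=> H. apply: functional_extensionality => x. exact: propositional_extensionality. Qed.

Section GenTop.
Variables (T : Type) (O : (T -> Prop) -> Prop) (HO : t_is_topology O).

Lemma open_ext U V : O U -> (forall x, U x <-> V x) -> O V.
Proof. by move=> HU /set_ext <-. Qed.

Lemma open_T : O (fun _ => True).
Proof. exact: (proj1 HO). Qed.

Lemma open_and U V : O U -> O V -> O (fun x => U x /\ V x).
Proof. exact: (proj1 (proj2 HO)). Qed.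

Lemma open_unionF (F : (T -> Prop) -> Prop) : (forall U, F U -> O U) ->
  O (fun x => exists U, F U /\ U x).
Proof. exact: (proj2 (proj2 HO)). Qed.

Lemma open_empty : O (fun _ => False).
Proof.
apply: (open_ext (open_unionF (F := fun _ => False) _)) => //.
move=> x; split; [by case=> ? []|done].
Qed.

Lemma open_or U V : O U -> O V -> O (fun x => U x \/ V x).
Proof.
move=> HU HV.
apply: (open_ext (open_unionF (F := fun W => W = U \/ W = V) _)).
  by move=> W [->|->].
move=> x; split.
- by case=> W [[->|->] h]; [left|right].
- case=> h; [exists U | exists V]; split => //; [left|right] => //.
Qed.

Lemma open_const (P : Prop) : O (fun _ => P).
Proof.
case: (classic P) => h.
- apply: (open_ext open_T) => x; tauto.
- apply: (open_ext open_empty) => x; tauto.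
Qed.

Lemma open_local U : (forall x, U x -> exists N, O N /\ N x /\ forall y, N y -> U y) -> O U.
Proof.
move=> H.
apply: (open_ext (open_unionF (F := fun N => O N /\ forall y, N y -> U y) _)).
  by move=> N [].
move=> x; split.
- by case=> N [[_ HN] Nx]; apply: HN.
- move=> Ux. have [N [ON [Nx HN]]] := H x Ux. by exists N.
Qed.

Hypothesis Hc : t_compact O.
Hypothesis Hh : t_hausdorff O.

Lemma sep_point_closed (A : T -> Prop) y : O (fun x => ~ A x) -> ~ A y ->
  exists U V, O U /\ O V /\ (forall x, A x -> U x) /\ V y /\ (forall z, ~ (U z /\ V z)).
Proof.
move=> HA Ay.
pose Fm W := W = (fun x => ~ A x) \/
   (O W /\ exists V, O V /\ V y /\ forall z, ~ (W z /\ V z)).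
have [l [Hl Hcov]] : exists l : list (T -> Prop),
      (forall U, In U l -> Fm U) /\ (forall x, exists U, In U l /\ U x).
  apply: Hc.
  - by move=> W [->|[]].
  - move=> x. case: (classic (A x)) => Ax.
    + have nxy : x <> y by move=> e; subst.
      have [U [V [OU [OV [Ux [Vy D]]]]]] := Hh nxy.
      exists U; split => //. right; split => //. by exists V.
    + exists (fun x => ~ A x); split => //; by left.
have key : forall l : list (T -> Prop), (forall U, In U l -> Fm U) ->
   exists U V, O U /\ O V /\ V y /\ (forall z, ~ (U z /\ V z)) /\
     forall W, In W l -> forall x, A x -> W x -> U x.
  elim=> [|W l0 IH] Hl'.
  - exists (fun _ => False), (fun _ => True). split; [exact: open_empty|].
    split; [exact: open_T|]. split => //. split; [by move=> z []|]. by [].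
  - have [U [V [OU [OV [Vy [D HW]]]]]] := IH (fun U h => Hl' U (or_intror h)).
    case: (Hl' W (or_introl erefl)) => [eW|[OW [V' [OV' [V'y D']]]]].
    + exists U, V. split; [done|split; [done|split; [done|split; [done|]]]]. move=> W' [<-|iW] x Ax.
      * by rewrite eW.
      * exact: HW.
    + exists (fun x => U x \/ W x), (fun x => V x /\ V' x).
      split; [exact: open_or|]. split; [exact: open_and|]. split => //.
      split; first by move=> z [[Uz|Wz] [Vz V'z]]; [apply: (D z)|apply: (D' z)].
      move=> W' [<-|iW] x Ax Wx; [by right|left; exact: (HW W' iW x Ax Wx)].
have [U [V [OU [OV [Vy [D HW]]]]]] := key l Hl.
exists U, V. split; [done|split; [done|split; [|done]]]. move=> x Ax.
have [W [iW Wx]] := Hcov x. exact: (HW W iW x Ax Wx).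
Qed.

Lemma normal (A B : T -> Prop) : O (fun x => ~ A x) -> O (fun x => ~ B x) ->
  (forall x, ~ (A x /\ B x)) ->
  exists U V, O U /\ O V /\ (forall x, A x -> U x) /\ (forall x, B x -> V x) /\
     (forall z, ~ (U z /\ V z)).
Proof.
move=> HA HB AB.
pose Fm W := W = (fun x => ~ A x) \/
   (O W /\ exists V, O V /\ (forall x, B x -> V x) /\ forall z, ~ (W z /\ V z)).
have [l [Hl Hcov]] : exists l : list (T -> Prop),
      (forall U, In U l -> Fm U) /\ (forall x, exists U, In U l /\ U x).
  apply: Hc.
  - by move=> W [->|[]].
  - move=> x. case: (classic (A x)) => Ax.
    + have Bx : ~ B x by move=> Bx; apply: (AB x).
      have [U [V [OU [OV [HU [Vx D]]]]]] := sep_point_closed HB Bx.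
      exists V; split => //. right; split => //. exists U. split => //. split => //.
      move=> z [Vz Uz]. exact: (D z).
    + exists (fun x => ~ A x); split => //; by left.
have key : forall l : list (T -> Prop), (forall U, In U l -> Fm U) ->
   exists U V, O U /\ O V /\ (forall x, B x -> V x) /\ (forall z, ~ (U z /\ V z)) /\
     forall W, In W l -> forall x, A x -> W x -> U x.
  elim=> [|W l0 IH] Hl'.
  - exists (fun _ => False), (fun _ => True). split; [exact: open_empty|].
    split; [exact: open_T|]. split => //. split; [by move=> z []|]. by [].
  - have [U [V [OU [OV [Vy [D HW]]]]]] := IH (fun U h => Hl' U (or_intror h)).
    case: (Hl' W (or_introl erefl)) => [eW|[OW [V' [OV' [V'y D']]]]].
    + exists U, V. split; [done|split; [done|split; [done|split; [done|]]]]. move=> W' [<-|iW] x Ax.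
      * by rewrite eW.
      * exact: HW.
    + exists (fun x => U x \/ W x), (fun x => V x /\ V' x).
      split; [exact: open_or|]. split; [exact: open_and|].
      split; first by move=> x Bx; split; [apply: Vy|apply: V'y].
      split; first by move=> z [[Uz|Wz] [Vz V'z]]; [apply: (D z)|apply: (D' z)].
      move=> W' [<-|iW] x Ax Wx; [by right|left; exact: (HW W' iW x Ax Wx)].
have [U [V [OU [OV [Vy [D HW]]]]]] := key l Hl.
exists U, V. split; [done|split; [done|split; [|split; done]]]. move=> x Ax.
have [W [iW Wx]] := Hcov x. exact: (HW W iW x Ax Wx).
Qed.
End GenTop.

Section Main.
Variables (X : Type) (OX : (X -> Prop) -> Prop) (HX : t_is_topology OX).
Variables (k : fieldType) (a : k -> R) (Ha : nonarch_abs a).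

Definition clopen (D : X -> Prop) := OX D /\ OX (fun x => ~ D x).

Lemma clopenC D : clopen D -> clopen (fun x => ~ D x).
Proof.
case=> h1 h2; split => //. apply: (open_ext h1) => x. split; [tauto|exact: NNPP].
Qed.

Lemma clopen_and D E : clopen D -> clopen E -> clopen (fun x => D x /\ E x).
Proof.
case=> h1 h2 [h3 h4]; split; first exact: open_and.
apply: (open_ext (open_or HX h2 h4)) => x. split; [tauto|].
move=> h. case: (classic (D x)); tauto.
Qed.

Lemma cbd_ext (h1 h2 : Cbd OX a) : (forall x, proj1_sig h1 x = proj1_sig h2 x) -> h1 = h2.
Proof.
case: h1 => f1 p1; case: h2 => f2 p2 /= H.
have e : f1 = f2 by apply: functional_extensionality.
subst. f_equal. apply: proof_irrelevance.
Qed.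

Definition piece (D : X -> Prop) (g : X -> k) (x : X) : k :=
  if excluded_middle_informative (D x) then g x else GRing.zero.

Lemma piece_in D g x : D x -> piece D g x = g x.
Proof. by rewrite /piece; case: excluded_middle_informative. Qed.
Lemma piece_out D g x : ~ D x -> piece D g x = GRing.zero.
Proof. by rewrite /piece; case: excluded_middle_informative. Qed.

Lemma cont_piece D g : clopen D ->
  (forall U, k_open a U -> OX (fun x => D x /\ U (g x))) ->
  t_continuous OX (k_open a) (piece D g).
Proof.
move=> [h1 h2] H U HU.
apply: (open_ext (open_or HX (H U HU) (open_and HX h2 (open_const HX (U GRing.zero))))).
move=> x. case: (classic (D x)) => Dx.
- rewrite piece_in //. tauto.
- rewrite piece_out //. tauto.
Qed.

Lemma bound_piece D g C : (forall x, D x -> a (g x) <= C) ->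
  forall x, a (piece D g x) <= Rmax C 0.
Proof.
move=> H x. case: (classic (D x)) => Dx.
- rewrite piece_in //. have := H x Dx. have := Rmax_l C 0. lra.
- rewrite piece_out // (a0 Ha). exact: Rmax_r.
Qed.

Lemma cconst_bc (c : k) : bounded_continuous OX a (fun _ => c).
Proof.
split; first by move=> U HU; exact: (open_const HX).
exists (a c) => x; exact: Rle_refl.
Qed.
Definition cconst (c : k) : Cbd OX a := exist _ _ (cconst_bc c).

Lemma mask_bc D (HD : clopen D) (h : Cbd OX a) : bounded_continuous OX a (piece D (proj1_sig h)).
Proof.
case: h => f [cf [C HC]] /=. split.
- apply: cont_piece => // U HU. apply: (open_and HX); [exact: (proj1 HD)|exact: cf].
- exists (Rmax C 0). apply: bound_piece => x _. exact: HC.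
Qed.
Definition mask D (HD : clopen D) (h : Cbd OX a) : Cbd OX a := exist _ _ (mask_bc HD h).

Lemma ind_bc D (HD : clopen D) : bounded_continuous OX a (piece D (fun _ => (GRing.one k))).
Proof.
split.
- apply: cont_piece => // U HU. apply: (open_and HX); [exact: (proj1 HD)|exact: (open_const HX)].
- exists (Rmax (a (GRing.one k)) 0). apply: bound_piece => x _. exact: Rle_refl.
Qed.
Definition ind D (HD : clopen D) : Cbd OX a := exist _ _ (ind_bc HD).

Lemma invm_bc D (HD : clopen D) (h : Cbd OX a) s (hs : 0 < s)
  (Hs : forall x, D x -> s <= a (proj1_sig h x)) :
  bounded_continuous OX a (piece D (fun x => (@GRing.inv k) (proj1_sig h x))).
Proof.
case: h Hs => f [cf [C HC]] /= Hs. split.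
- apply: cont_piece => // U HU.
  apply: (open_ext (open_and HX (proj1 HD) (cf _ (kopen_inv Ha hs HU)))).
  move=> x; split; [tauto|]. move=> [Dx Ux]; split => //. split => //. exact: Hs.
- exists (Rmax (/ s) 0). apply: bound_piece => x Dx.
  have hx := Hs x Dx.
  have nz : f x <> GRing.zero by move=> /(a_eq0 Ha); lra.
  rewrite (a_inv Ha nz). apply: Rinv_le_contravar => //.
Qed.
Definition invm D (HD : clopen D) (h : Cbd OX a) s (hs : 0 < s)
  (Hs : forall x, D x -> s <= a (proj1_sig h x)) : Cbd OX a := exist _ _ (invm_bc HD hs Hs).

Section Semi.
Variable p : BSC OX a.
Notation nu := (proj1_sig p).
Let Hp := proj2_sig p.

Lemma nu_ge0 h : 0 <= nu h.
Proof. exact: (proj1 Hp). Qed.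
Lemma nu_add f g h : (forall x, proj1_sig h x = GRing.add (proj1_sig f x) (proj1_sig g x)) ->
  nu h <= nu f + nu g.
Proof. exact: (proj1 (proj2 Hp)). Qed.
Lemma nu_mul f g h : (forall x, proj1_sig h x = GRing.mul (proj1_sig f x) (proj1_sig g x)) ->
  nu h = nu f * nu g.
Proof. exact: (proj1 (proj2 (proj2 Hp))). Qed.
Lemma nu_const c h : (forall x, proj1_sig h x = c) -> nu h = a c.
Proof. exact: (proj1 (proj2 (proj2 (proj2 Hp)))). Qed.
Lemma nu_bound h C : (forall x, a (proj1_sig h x) <= C) -> nu h <= C.
Proof. exact: (proj2 (proj2 (proj2 (proj2 Hp)))). Qed.

Lemma nu_ind01 D (HD : clopen D) : nu (ind HD) = 0 \/ nu (ind HD) = 1.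
Proof.
have e : nu (ind HD) = nu (ind HD) * nu (ind HD).
  apply: nu_mul => x /=. case: (classic (D x)) => Dx.
  - by rewrite !piece_in // GRing.mulr1.
  - by rewrite !piece_out // GRing.mulr0.
have := nu_ge0 (ind HD). nra.
Qed.

Lemma nu_ind_compl D (HD : clopen D) :
  (nu (ind HD) = 1 /\ nu (ind (clopenC HD)) = 0) \/
  (nu (ind HD) = 0 /\ nu (ind (clopenC HD)) = 1).
Proof.
have e1 : nu (cconst (GRing.one k)) <= nu (ind HD) + nu (ind (clopenC HD)).
  apply: nu_add => x /=. case: (classic (D x)) => Dx.
  - by rewrite piece_in // piece_out ?GRing.addr0.
  - by rewrite piece_out // piece_in ?GRing.add0r.
rewrite (nu_const (c := (GRing.one k))) // (a1 Ha) in e1.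
have e2 : nu (cconst GRing.zero) = nu (ind HD) * nu (ind (clopenC HD)).
  apply: nu_mul => x /=. case: (classic (D x)) => Dx.
  - by rewrite piece_in // piece_out ?GRing.mulr0.
  - by rewrite piece_out // GRing.mul0r.
rewrite (nu_const (c := GRing.zero)) // (a0 Ha) in e2.
case: (nu_ind01 HD) => h1; case: (nu_ind01 (clopenC HD)) => h2; rewrite h1 h2 in e1 e2 *; lra.
Qed.

Lemma nu_vanish D (HD : clopen D) h M : nu (ind HD) = 0 -> 0 <= M ->
  (forall x, ~ D x -> a (proj1_sig h x) <= M) -> nu h <= M.
Proof.
move=> h0 hM HM.
have e1 : nu h <= nu (mask HD h) + nu (mask (clopenC HD) h).
  apply: nu_add => x /=. case: (classic (D x)) => Dx.
  - by rewrite piece_in // piece_out ?GRing.addr0.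
  - by rewrite piece_out // piece_in ?GRing.add0r.
have e2 : nu (mask HD h) = nu h * nu (ind HD).
  apply: nu_mul => x /=. case: (classic (D x)) => Dx.
  - by rewrite !piece_in // GRing.mulr1.
  - by rewrite !piece_out // GRing.mulr0.
have e3 : nu (mask (clopenC HD) h) <= M.
  apply: nu_bound => x /=. case: (classic (D x)) => Dx.
  - by rewrite piece_out ?(a0 Ha).
  - rewrite piece_in //. exact: HM.
rewrite e2 h0 in e1. lra.
Qed.

Lemma nu_lower D (HD : clopen D) h s : 0 < s -> (forall x, D x -> s <= a (proj1_sig h x)) ->
  nu (ind HD) = 1 -> s <= nu h.
Proof.
move=> hs Hs h1.
have e : nu (ind HD) = nu h * nu (invm HD hs Hs).
  apply: nu_mul => x /=. case: (classic (D x)) => Dx.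
  - rewrite !piece_in //. have hx := Hs x Dx.
    have nz : proj1_sig h x != GRing.zero by apply/eqP => /(a_eq0 Ha); lra.
    by rewrite GRing.mulfV.
  - by rewrite !piece_out // GRing.mulr0.
have b : nu (invm HD hs Hs) <= / s.
  apply: nu_bound => x /=. case: (classic (D x)) => Dx.
  - rewrite piece_in //. have hx := Hs x Dx.
    have nz : proj1_sig h x <> GRing.zero by move=> /(a_eq0 Ha); lra.
    rewrite (a_inv Ha nz). apply: Rinv_le_contravar => //.
  - rewrite piece_out // (a0 Ha). left. exact: Rinv_0_lt_compat.
have g0 := nu_ge0 (invm HD hs Hs). have h0 := nu_ge0 h.
rewrite h1 in e.
have : s * nu (invm HD hs Hs) <= 1.
  have -> : 1 = s * / s by field; lra.
  apply: Rmult_le_compat_l; lra.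
move=> hsi.
have pos : 0 < nu (invm HD hs Hs).
  case: g0 => // e0. rewrite -e0 Rmult_0_r in e. lra.
apply: (Rmult_le_reg_r _ _ _ pos). lra.
Qed.

Lemma nu_ind_irr D (H1 H2 : clopen D) : nu (ind H1) = nu (ind H2).
Proof. by rewrite (proof_irrelevance _ H1 H2). Qed.

Lemma nu_ind_and D E (HD : clopen D) (HE : clopen E) :
  nu (ind HD) = 1 -> nu (ind HE) = 1 -> nu (ind (clopen_and HD HE)) = 1.
Proof.
move=> h1 h2. rewrite (@nu_mul (ind HD) (ind HE)) ?h1 ?h2; first lra.
move=> x /=. case: (classic (D x)) => Dx; case: (classic (E x)) => Ex.
- by rewrite !piece_in // GRing.mulr1.
- rewrite (piece_out (D := fun x => D x /\ E x)); last tauto.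
  by rewrite (piece_out (D := E)) // GRing.mulr0.
- rewrite (piece_out (D := fun x => D x /\ E x)); last tauto.
  by rewrite (piece_out (D := D)) // GRing.mul0r.
- rewrite (piece_out (D := fun x => D x /\ E x)); last tauto.
  by rewrite (piece_out (D := D)) // GRing.mul0r.
Qed.

Lemma nu_ind_sub D E (HD : clopen D) (HE : clopen E) : (forall x, D x -> E x) ->
  nu (ind HD) = 1 -> nu (ind HE) = 1.
Proof.
move=> sub h1.
have e : nu (ind HD) = nu (ind HD) * nu (ind HE).
  apply: nu_mul => x /=. case: (classic (D x)) => Dx.
  - by rewrite !piece_in ?GRing.mulr1 //; apply: sub.
  - by rewrite (piece_out (D := D)) // GRing.mul0r.
rewrite h1 in e. lra.
Qed.

Lemma nu_ind_empty D (HD : clopen D) : (forall x, ~ D x) -> nu (ind HD) = 0.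
Proof.
move=> H. have := nu_ge0 (ind HD).
have : nu (ind HD) <= 0.
  apply: nu_bound => x /=. rewrite piece_out // (a0 Ha). lra.
lra.
Qed.

Lemma nu_ind_full D (HD : clopen D) : (forall x, D x) -> nu (ind HD) = 1.
Proof.
move=> H. rewrite (nu_const (c := (GRing.one k))) ?(a1 Ha) //.
move=> x /=. by rewrite piece_in.
Qed.
End Semi.
End Main.

Lemma open_lt_set c : Rtopology.open_set (fun t => t < c).
Proof.
apply: ball_open => t ht. exists (c - t); split; [lra|] => u hu.
have := Rle_abs (u - t). lra.
Qed.
Lemma open_gt_set c : Rtopology.open_set (fun t => c < t).
Proof.
apply: ball_open => t ht. exists (t - c); split; [lra|] => u hu.
have := Rle_abs (t - u). rewrite Rabs_minus_sym in hu. lra.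
Qed.

Section Top2.
Variables (X : Type) (OX : (X -> Prop) -> Prop) (HX : t_is_topology OX).
Variables (k : fieldType) (a : k -> R) (Ha : nonarch_abs a).

Notation TB := (BSC_open OX a).
Notation B := (BSC OX a).

Lemma TB_top : t_is_topology TB.
Proof.
split; [|split].
- move=> O HO _. exact: (proj1 HO).
- move=> U V HU HV O HO HS. exact: (proj1 (proj2 HO) _ _ (HU O HO HS) (HV O HO HS)).
- move=> F HF O HO HS. apply: (proj2 (proj2 HO)) => U FU. exact: (HF U FU O HO HS).
Qed.

Lemma TB_sub h (W : R -> Prop) : Rtopology.open_set W -> TB (fun p : B => W (proj1_sig p h)).
Proof. move=> HW O HO HS. apply: HS. exists h, W. split => //. Qed.

Lemma TB_lt h c : TB (fun p : B => proj1_sig p h < c).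
Proof. exact (TB_sub h (@open_lt_set c)). Qed.
Lemma TB_gt h c : TB (fun p : B => c < proj1_sig p h).
Proof. exact (TB_sub h (@open_gt_set c)). Qed.

Definition Nb (U : B -> Prop) := forall p, U p -> exists l : list (Cbd OX a * R),
  (forall he, In he l -> 0 < snd he) /\
  forall q : B, (forall he, In he l -> Rabs (proj1_sig q (fst he) - proj1_sig p (fst he)) < snd he) -> U q.

Lemma Nb_top : t_is_topology Nb.
Proof.
split; [|split].
- move=> p _. exists nil. split => //.
- move=> U V HU HV p [Up Vp].
  have [l1 [H1 K1]] := HU p Up. have [l2 [H2 K2]] := HV p Vp.
  exists (l1 ++ l2). split.
  + move=> he hin; case: (in_app_or _ _ _ hin) => h; [exact: H1|exact: H2].
  + move=> q Hq. split; [apply: K1|apply: K2] => he hin; apply: Hq; apply: in_or_app; tauto.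
- move=> F HF p [U [FU Up]]. have [l [H K]] := HF U FU p Up.
  exists l. split => // q Hq. exists U. split => //. exact: K.
Qed.

Lemma TB_Nb U : TB U -> Nb U.
Proof.
move=> HU. apply: HU; first exact: Nb_top.
move=> V [h [W [HW HV]]] p Vp.
have [e [he He]] := open_ball HW (proj1 (HV p) Vp).
exists ((h, e) :: nil). split.
- by move=> he' [<-|[]].
- move=> q Hq. apply/HV. apply: He. exact: (Hq (h, e) (or_introl erefl)).
Qed.

Lemma TB_local (U : B -> Prop) : (forall p, U p -> exists N, TB N /\ N p /\ forall q, N q -> U q) -> TB U.
Proof. exact: (open_local TB_top). Qed.

Lemma B_eq (p q : B) : (forall h, proj1_sig p h = proj1_sig q h) -> p = q.
Proof.
case: p => f pf; case: q => g pg /= H.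
have e : f = g by apply: functional_extensionality.
subst. f_equal. apply: proof_irrelevance.
Qed.

Lemma clopen_pre (h : Cbd OX a) (V : k -> Prop) : k_open a V -> k_open a (fun y => ~ V y) ->
  clopen OX (fun x => V (proj1_sig h x)).
Proof.
move=> h1 h2. have cf := proj1 (proj2_sig h). split; [exact: cf|exact: (cf _ h2)].
Qed.

Lemma kopen_nlt s : 0 < s -> k_open a (fun y => ~ a y < s).
Proof.
move=> hs. apply: (open_ext (kopen_ge Ha hs)) => y; split; lra.
Qed.

Lemma sep_lt (p q : B) h : proj1_sig p h < proj1_sig q h ->
  exists D (HD : clopen OX D), proj1_sig p (ind HX Ha HD) = 0 /\ proj1_sig q (ind HX Ha HD) = 1.
Proof.
move=> hlt. have p0 := nu_ge0 p h.
pose s := (proj1_sig p h + proj1_sig q h) / 2.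
have hs : 0 < s by rewrite /s; lra.
have HD : clopen OX (fun x => s <= a (proj1_sig h x)).
  exact (clopen_pre h (kopen_ge Ha hs) (kopen_nge Ha hs)).
exists (fun x => s <= a (proj1_sig h x)), HD. split.
- case: (nu_ind01 HX Ha p HD) => // e1.
  have := nu_lower (h := h) hs (fun x hx => hx) e1. rewrite /s; lra.
- case: (nu_ind01 HX Ha q HD) => // e0.
  have : proj1_sig q h <= s.
    apply: (nu_vanish e0); first lra. move=> x hx. lra.
  rewrite /s; lra.
Qed.

Lemma sep (p q : B) : p <> q ->
  exists D (HD : clopen OX D), proj1_sig p (ind HX Ha HD) = 0 /\ proj1_sig q (ind HX Ha HD) = 1.
Proof.
move=> npq.
have [h hh] : exists h, proj1_sig p h <> proj1_sig q h.
  apply: NNPP => H. apply: npq. apply: B_eq => h. apply: NNPP => H'. apply: H. by exists h.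
case: (Rlt_le_dec (proj1_sig p h) (proj1_sig q h)) => hl.
- exact: (sep_lt hl).
- have hl' : proj1_sig q h < proj1_sig p h by lra.
  have [D [HD [e1 e2]]] := sep_lt hl'.
  exists (fun x => ~ D x), (clopenC HD).
  case: (nu_ind_compl HX Ha p HD); case: (nu_ind_compl HX Ha q HD); lra.
Qed.

Lemma TB_haus : t_hausdorff TB.
Proof.
move=> p q npq. have [D [HD [e1 e2]]] := sep npq.
exists (fun r : B => proj1_sig r (ind HX Ha HD) < 1/2), (fun r : B => 1/2 < proj1_sig r (ind HX Ha HD)).
split; [exact: TB_lt|]. split; [exact: TB_gt|]. split; [lra|]. split; [lra|].
move=> z [h1 h2]; lra.
Qed.

Lemma TB_td : t_totally_disconnected TB.
Proof.
move=> S HS p q Sp Sq. apply: NNPP => npq.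
have [D [HD [e1 e2]]] := sep npq. apply: HS.
exists (fun r : B => proj1_sig r (ind HX Ha HD) < 1/2), (fun r : B => 1/2 < proj1_sig r (ind HX Ha HD)).
split; [exact: TB_lt|]. split; [exact: TB_gt|].
split; first by move=> r _; case: (nu_ind01 HX Ha r HD) => ->; [left|right]; lra.
split; first by exists p; split => //; lra.
split; first by exists q; split => //; lra.
move=> r _ h1 h2; lra.
Qed.

Lemma iota_cont : t_continuous OX TB (iota OX a Ha).
Proof.
move=> V HV. apply: (HV (fun V => OX (fun x => V (iota OX a Ha x)))).

- split; [|split].
  + exact: (open_ext (open_T HX)).
  + move=> U W HU HW. exact: (open_and HX HU HW).
  + move=> F HF.
    apply: (open_ext (open_unionF HX (F := fun W => exists U, F U /\ forall x, W x <-> U (iota OX a Ha x)) _)).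
    * move=> W [U [FU HW]]. apply: (open_ext (HF U FU)) => x. by rewrite HW.
    * move=> x; split.
      -- case=> W [[U [FU HW]] Wx]. exists U. split => //. by apply/HW.
      -- case=> U [FU Ux]. exists (fun x => U (iota OX a Ha x)). split => //. by exists U.
- move=> W [h [Wr [HWr HW]]].
  apply: (open_ext ((proj1 (proj2_sig h)) _ (kopen_aW Ha HWr))) => x.
  by rewrite HW.
Qed.

Lemma dense_piece (p : B) h e : 0 < e ->
  exists D (HD : clopen OX D), proj1_sig p (ind HX Ha HD) = 1 /\
    forall x, D x -> Rabs (a (proj1_sig h x) - proj1_sig p h) < e.
Proof.
move=> he. set t := proj1_sig p h. have t0 : 0 <= t := nu_ge0 p h.
set be := t + e / 2. have hbe : 0 < be by rewrite /be; lra.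
have [al [hal1 [hal2 hal3]]] : exists al, (al < 0 \/ 0 < al) /\ al < t /\
   (forall u, 0 <= u -> al < u -> u < be -> Rabs (u - t) < e).
  case: (Rlt_le_dec 0 t) => ht.
  - exists (Rmax (t - e) (t / 2)). split; first by right; have := Rmax_r (t - e) (t/2); lra.
    split; first by unfold Rmax; destruct Rle_dec; lra.
    move=> u u0 h1 h2. have := Rmax_l (t - e) (t/2). move=> h3. apply: Rabs_def1; rewrite /be in h2; lra.
  - exists (-1). split; first by left; lra. split; first lra.
    move=> u u0 h1 h2. apply: Rabs_def1; rewrite /be in h2; lra.
have H1 : clopen OX (fun x => a (proj1_sig h x) < be).
  exact (clopen_pre h (kopen_lt Ha hbe) (kopen_nlt hbe)).
have H2 : clopen OX (fun x => al < a (proj1_sig h x)).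
  exact (clopen_pre h (@kopen_gt _ _ Ha al) (kopen_ngt Ha hal1)).
exists _, (clopen_and HX H1 H2). split.
- apply: nu_ind_and.
  + case: (nu_ind_compl HX Ha p H1) => [[-> _]//|[_ e1]].
    have := nu_lower (h := h) hbe (fun x hx => Rnot_lt_le _ _ hx) e1.
    rewrite /be -/t; lra.
  + case: (nu_ind01 HX Ha p H2) => // e0. case: hal1 => hal1.
    * exfalso. have h1 := nu_ind_full HX Ha p H2. rewrite e0 in h1.
      have : (0:R) = 1 by apply: h1 => x; have := a_ge0 Ha (proj1_sig h x); lra.
      lra.
    * have := nu_vanish (h := h) (M := al) e0 (Rlt_le _ _ hal1) (fun x hx => Rnot_lt_le _ _ hx).
      rewrite -/t; lra.
- move=> x [h1 h2]. apply: hal3 => //. exact: a_ge0.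
Qed.

Lemma dense_list (p : B) (l : list (Cbd OX a * R)) : (forall he, In he l -> 0 < snd he) ->
  exists D (HD : clopen OX D), proj1_sig p (ind HX Ha HD) = 1 /\
    forall x, D x -> forall he, In he l -> Rabs (a (proj1_sig (fst he) x) - proj1_sig p (fst he)) < snd he.
Proof.
elim: l => [|[h e] l IH] Hl.
- have HD : clopen OX (fun _ : X => True) by split; [exact: open_T|exact: (open_const HX)].
  exists _, HD. split; [exact: nu_ind_full|done].
- have [D [HD [e1 H1]]] := IH (fun he hin => Hl he (or_intror hin)).
  have [E [HE [e2 H2]]] := dense_piece p h (Hl (h, e) (or_introl erefl)).
  exists _, (clopen_and HX HD HE). split; first exact: nu_ind_and.
  move=> x [Dx Ex] he [<-|hin]; [exact: H2|exact: H1].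
Qed.

Lemma TB_dense : t_dense TB (fun p => exists x, p = iota OX a Ha x).
Proof.
move=> U HU [p Up]. have [l [Hl Kl]] := TB_Nb HU Up.
have [D [HD [e1 H1]]] := dense_list p Hl.
have [x Dx] : exists x, D x.
  apply: NNPP => H. rewrite (nu_ind_empty HX Ha p HD) in e1; [lra|]. move=> x Dx; apply: H; by exists x.
exists (iota OX a Ha x). split; last by exists x.
apply: Kl => he hin /=. exact: H1.
Qed.
End Top2.

Section ULim.
Variables (T : Type) (G : (T -> Prop) -> Prop).
Hypotheses (GT : G (fun _ => True))
  (GI : forall A B, G A -> G B -> G (fun x => A x /\ B x))
  (GS : forall A B : T -> Prop, (forall x, A x -> B x) -> G A -> G B)
  (G0 : ~ G (fun _ => False))
  (Gu : forall A, G A \/ G (fun x => ~ A x)).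

Lemma G_ne A : G A -> exists t, A t.
Proof.
move=> GA. apply: NNPP => H. apply: G0. apply: (GS _ GA) => x Ax. apply: H. by exists x.
Qed.

Lemma ulim_ex (phi : T -> R) : (exists M, forall t, 0 <= phi t <= M) ->
  exists L, forall e, 0 < e -> G (fun t => Rabs (phi t - L) < e).
Proof.
move=> [M HM].
pose E r := G (fun t => r <= phi t).
have E0 : E 0 by apply: (GS _ GT) => t _; have := HM t; lra.
have Eb : bound E.
  exists M => r Er. apply: Rnot_lt_le => hr. apply: G0.
  apply: (GS _ Er) => t ht. have := HM t; lra.
have [L [HL1 HL2]] := completeness E Eb (ex_intro _ 0 E0).
exists L => e he.
have [r [Er hr]] : exists r, E r /\ L - e < r.
  apply: NNPP => H. have : L <= L - e.
    apply: HL2 => r Er. apply: Rnot_lt_le => hr. apply: H. by exists r.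
  lra.
have nE : ~ E (L + e / 2) by move=> h; have := HL1 _ h; lra.
have G2 : G (fun t => ~ (L + e / 2 <= phi t)) by case: (Gu (fun t => L + e / 2 <= phi t)).
apply: (GS _ (GI Er G2)) => t [h1 h2]. apply: Rabs_def1; lra.
Qed.

Lemma ulim_unique (phi : T -> R) L1 L2 :
  (forall e, 0 < e -> G (fun t => Rabs (phi t - L1) < e)) ->
  (forall e, 0 < e -> G (fun t => Rabs (phi t - L2) < e)) -> L1 = L2.
Proof.
move=> H1 H2. apply: NNPP => ne.
have he : 0 < Rabs (L1 - L2) / 2 by have := Rabs_pos_lt (L1 - L2); lra.
have [t [h1 h2]] := G_ne (GI (H1 _ he) (H2 _ he)).
have := Rabs_triang (phi t - L2) (L1 - phi t).
have -> : phi t - L2 + (L1 - phi t) = L1 - L2 by ring.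
rewrite Rabs_minus_sym in h1. lra.
Qed.
End ULim.

Section Comp.
Variables (X : Type) (OX : (X -> Prop) -> Prop) (HX : t_is_topology OX).
Variables (k : fieldType) (a : k -> R) (Ha : nonarch_abs a).
Notation TB := (BSC_open OX a).
Notation B := (BSC OX a).

Lemma TB_compact : t_compact TB.
Proof.
move=> F HF Hcov. apply: NNPP => Hno.
pose Phi (A : B -> Prop) := exists l : list (B -> Prop), (forall U, In U l -> F U) /\
   forall q, (forall U, In U l -> ~ U q) -> A q.
have PT : Phi (fun _ => True) by exists nil.
have PI : forall A B, Phi A -> Phi B -> Phi (fun x => A x /\ B x).
  move=> A1 B1 [l1 [H1 K1]] [l2 [H2 K2]]. exists (l1 ++ l2). split.
  - move=> U hin; case: (in_app_or _ _ _ hin) => h; [exact: H1|exact: H2].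
  - move=> q Hq. split; [apply: K1|apply: K2] => U hin; apply: Hq; apply: in_or_app; tauto.
have PS : forall A B : B -> Prop, (forall x, A x -> B x) -> Phi A -> Phi B.
  move=> A1 B1 sub [l [H K]]. exists l. split => // q Hq. apply: sub. exact: K.
have P0 : ~ Phi (fun _ => False).
  move=> [l [H K]]. apply: Hno. exists l. split => // x. apply: NNPP => nx.
  apply: (K x) => U hin Ux. apply: nx. by exists U.
have [G [FG [GI [GS [G0 Gu]]]]] := UF.uf_lemma PT PI PS P0.
have GT : G (fun _ => True) := FG _ PT.
have bnd : forall h : Cbd OX a, exists M, forall q : B, 0 <= proj1_sig q h <= M.
  move=> h. have [C HC] := proj2 (proj2_sig h). exists C => q. split; [exact: nu_ge0|].
  exact: nu_bound.
pose Lf (h : Cbd OX a) := proj1_sig (constructive_indefinite_description _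
     (ulim_ex GT GI GS G0 Gu (bnd h))).
have HL : forall h e, 0 < e -> G (fun q : B => Rabs (proj1_sig q h - Lf h) < e).
  move=> h. exact: (proj2_sig (constructive_indefinite_description _
     (ulim_ex GT GI GS G0 Gu (bnd h)))).
have Lnn : forall h, 0 <= Lf h.
  move=> h. apply: Rnot_lt_le => hn.
  have [q hq] := G_ne GS G0 (HL h (- Lf h) ltac:(lra)).
  have := nu_ge0 q h. have := Rabs_def2 _ _ hq. lra.
have Lbd : forall h C, (forall x, a (proj1_sig h x) <= C) -> Lf h <= C.
  move=> h C HC. apply: Rnot_lt_le => hn.
  have [q hq] := G_ne GS G0 (HL h (Lf h - C) ltac:(lra)).
  have := nu_bound q HC. have := Rabs_def2 _ _ hq. lra.
have Hsemi : bounded_mult_seminorm OX a Lf.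
  split; first exact: Lnn.
  split.
    move=> f g h Hfgh. apply: Rnot_lt_le => hn.
    pose e := (Lf h - Lf f - Lf g) / 3.
    have he : 0 < e by rewrite /e; lra.
    have [q [[h1 h2] h3]] := G_ne GS G0 (GI _ _ (GI _ _ (HL f e he) (HL g e he)) (HL h e he)).
    have := nu_add q Hfgh.
    have := Rabs_def2 _ _ h1. have := Rabs_def2 _ _ h2. have := Rabs_def2 _ _ h3.
    rewrite /e. lra.
  split.
    move=> f g h Hfgh. apply: NNPP => ne.
    have [Cf HCf] := proj2 (proj2_sig f). have [Cg HCg] := proj2 (proj2_sig g).
    have Lf0 := Lnn f. have Lf1 := Lbd f Cf HCf. have Lg0 := Lnn g.
    have Cg0 : 0 <= Cg by have := Lbd g Cg HCg; lra.
    pose d := Rabs (Lf h - Lf f * Lf g).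
    have hd : 0 < d by apply: Rabs_pos_lt; lra.
    pose e := d / (2 * (1 + Cg + Cf)).
    have he : 0 < e by rewrite /e; apply: Rdiv_lt_0_compat => //; lra.
    have [q [[h1 h2] h3]] := G_ne GS G0 (GI _ _ (GI _ _ (HL f e he) (HL g e he)) (HL h e he)).
    have eq := nu_mul q Hfgh.
    have bg := nu_bound q HCg. have g0 := nu_ge0 q g.
    have [h1a h1b] := Rabs_def2 _ _ h1. have [h2a h2b] := Rabs_def2 _ _ h2.
    have [h3a h3b] := Rabs_def2 _ _ h3.
    have a1 : (proj1_sig q f - Lf f) * proj1_sig q g <= e * Cg by nra.
    have a2 : - (e * Cg) <= (proj1_sig q f - Lf f) * proj1_sig q g by nra.
    have a3 : Lf f * (proj1_sig q g - Lf g) <= Cf * e by nra.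
    have a4 : - (Cf * e) <= Lf f * (proj1_sig q g - Lf g) by nra.
    have ed : e * (2 * (1 + Cg + Cf)) = d by rewrite /e; field; lra.
    have : Rabs (Lf h - Lf f * Lf g) < e * (1 + Cg + Cf).
      apply: Rabs_def1; rewrite eq in h3a h3b; nra.
    rewrite -/d. nra.
  split.
    move=> c h Hc. apply: (ulim_unique GI GS G0 (phi := fun q : B => proj1_sig q h)).
    - exact: HL.
    - move=> e he. apply: (GS _ _ _ GT) => q _. rewrite (nu_const q Hc). rewrite Rminus_diag Rabs_R0. lra.
  exact: Lbd.
pose p : B := exist _ Lf Hsemi.
have [U [FU Up]] := Hcov p.
have GU : G U.
  have [l [Hl Kl]] := TB_Nb (HF U FU) Up.
  have : G (fun q : B => forall he, In he l -> Rabs (proj1_sig q (fst he) - proj1_sig p (fst he)) < snd he).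
    clear Kl. elim: l Hl => [|he l IH] Hl.
    - by apply: (GS _ _ _ GT).
    - apply: (GS _ _ _ (GI _ _ (IH (fun he' h => Hl he' (or_intror h))) (HL (fst he) (snd he) (Hl he (or_introl erefl))))).
      move=> q [h1 h2] he' [<-|hin]; [exact: h2|exact: h1].
  move=> Hall. exact: (GS _ _ Kl Hall).
have GnU : G (fun q => ~ U q).
  apply: FG. exists (U :: nil). split; first by move=> U' [<-|[]].
  move=> q Hq. apply: Hq. by left.
have := GI _ _ GU GnU. move=> Hf. exact (G0 (GS _ _ (fun q (hq : U q /\ ~ U q) => (proj2 hq) (proj1 hq)) Hf)).
Qed.
End Comp.

Section Univ.
Variables (X : Type) (OX : (X -> Prop) -> Prop) (HX : t_is_topology OX).
Variables (k : fieldType) (a : k -> R) (Ha : nonarch_abs a).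
Variables (Y : Type) (OY : (Y -> Prop) -> Prop) (HY : t_is_topology OY)
  (HYc : t_compact OY) (HYh : t_hausdorff OY) (HYt : t_totally_disconnected OY)
  (f : X -> Y) (hf : t_continuous OX OY f).
Notation TB := (BSC_open OX a).
Notation B := (BSC OX a).

Lemma pre_clopen V : clopen OY V -> clopen OX (fun x => V (f x)).
Proof. case=> h1 h2. split; [exact: hf|exact (hf h2)]. Qed.

Definition Pin (p : B) (V : Y -> Prop) :=
  exists HV : clopen OY V, proj1_sig p (ind HX Ha (pre_clopen HV)) = 1.

Lemma Pin_top p : Pin p (fun _ => True).
Proof.
have HV : clopen OY (fun _ : Y => True).
  split; [exact: (open_T HY)|exact: (open_const HY)].
exists HV. apply: nu_ind_full => //.
Qed.

Lemma Pin_empty p : ~ Pin p (fun _ => False).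
Proof.
case=> HV e. rewrite (nu_ind_empty HX Ha p (pre_clopen HV)) in e; [lra|by move=> x].
Qed.

Lemma Pin_and p V W : Pin p V -> Pin p W -> Pin p (fun y => V y /\ W y).
Proof.
case=> HV e1 [HW e2]. exists (clopen_and HY HV HW).
rewrite (nu_ind_irr HX Ha p _ (clopen_and HX (pre_clopen HV) (pre_clopen HW))).
exact: nu_ind_and.
Qed.

Lemma Pin_compl p V : clopen OY V -> Pin p V \/ Pin p (fun y => ~ V y).
Proof.
move=> HV. case: (nu_ind_compl HX Ha p (pre_clopen HV)) => [[e1 _]|[_ e2]].
- left. by exists HV.
- right. exists (clopenC HV).
  by rewrite (nu_ind_irr HX Ha p _ (clopenC (pre_clopen HV))).
Qed.

Lemma Pin_sub p V W : Pin p V -> clopen OY W -> (forall y, V y -> W y) -> Pin p W.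
Proof.
case=> HV e HW sub. exists HW. apply: (nu_ind_sub (HD := pre_clopen HV)) => // x. exact: sub.
Qed.

Definition K (p : B) (y : Y) := forall V, Pin p V -> V y.

Lemma Pin_in_open p W : OY W -> (forall y, K p y -> W y) ->
  exists C, Pin p C /\ forall y, C y -> W y.
Proof.
move=> OW HW.
pose Fm U := U = W \/ exists V, Pin p V /\ U = (fun y => ~ V y).
have [l [Hl Hcov]] : exists l : list (Y -> Prop),
      (forall U, In U l -> Fm U) /\ (forall x, exists U, In U l /\ U x).
  apply: HYc.
  - move=> U [->|[V [[HV _] ->]]] => //. exact: (proj2 HV).
  - move=> y. case: (classic (W y)) => Wy.
    + exists W. split => //. by left.
    + have : ~ K p y by move=> Ky; apply: Wy; exact: HW.
      move=> nK. have [V nV] : exists V, ~ (Pin p V -> V y).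
        apply: NNPP => H. apply: nK => V. apply: NNPP => H'. apply: H. by exists V.
      exists (fun y => ~ V y). split.
      * right. exists V. split => //. apply: NNPP => H'; apply: nV => h; by case: H'.
      * move=> Vy. apply: nV => _. exact: Vy.
have key : forall l : list (Y -> Prop), (forall U, In U l -> Fm U) ->
   exists C, Pin p C /\ forall y, C y -> forall U, In U l -> U y -> W y.
  elim=> [|U l0 IH] Hl'.
  - exists (fun _ => True). split; [exact: Pin_top|done].
  - have [C [PC HC]] := IH (fun U h => Hl' U (or_intror h)).
    case: (Hl' U (or_introl erefl)) => [eU|[V [PV eU]]].
    + exists C. split => // y Cy U' [<-|hin]; [by rewrite eU|exact: HC].
    + exists (fun y => C y /\ V y). split; first exact: Pin_and.
      move=> y [Cy Vy] U' [<-|hin]; [rewrite eU; by []|exact: HC].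
have [C [PC HC]] := key l Hl.
exists C. split => // y Cy. have [U [hin Uy]] := Hcov y. exact: (HC y Cy U hin Uy).
Qed.

Lemma K_ne p : exists y, K p y.
Proof.
apply: NNPP => H.
have [C [PC HC]] := Pin_in_open (open_empty HY) (fun y Ky => H (ex_intro _ y Ky)).
have HE : clopen OY (fun _ : Y => False) by split; [exact: (open_empty HY)|exact: (open_const HY)].
exact: (Pin_empty (Pin_sub PC HE HC)).
Qed.

Lemma notK p y : ~ K p y -> exists V, Pin p V /\ ~ V y.
Proof.
move=> nK. apply: NNPP => H. apply: nK => V PV. apply: NNPP => nV. apply: H. by exists V.
Qed.

Lemma K_closed p : OY (fun y => ~ K p y).
Proof.
apply: (open_local HY) => y nK. have [V [[HV e] nV]] := notK nK.
exists (fun z => ~ V z). split; first exact: (proj2 HV). split => // z nVz Kz.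
apply: nVz. apply: Kz. by exists HV.
Qed.

Lemma K_conn p : t_connected_subset OY (K p).
Proof.
move=> [U [V [OU [OV [cov [[y1 [K1 U1]] [[y2 [K2 V2]] disj]]]]]]].
have cA : OY (fun y => ~ (K p y /\ ~ V y)).
  apply: (open_ext (open_or HY (K_closed p) OV)) => y. split; [tauto|].
  move=> h. case: (classic (V y)); tauto.
have cB : OY (fun y => ~ (K p y /\ ~ U y)).
  apply: (open_ext (open_or HY (K_closed p) OU)) => y. split; [tauto|].
  move=> h. case: (classic (U y)); tauto.
have dAB : forall y, ~ ((K p y /\ ~ V y) /\ (K p y /\ ~ U y)).
  move=> y [[Ky nV] [_ nU]]. case: (cov y Ky); tauto.
have [U' [V' [OU' [OV' [AU' [BV' D']]]]]] := normal HY HYc HYh cA cB dAB.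
have KUV : forall y, K p y -> U' y \/ V' y.
  move=> y Ky. case: (cov y Ky) => h.
  - left. apply: AU'. split => // Vy. exact: (disj y Ky h Vy).
  - right. apply: BV'. split => // Uy. exact: (disj y Ky Uy h).
have [C [PC HC]] := Pin_in_open (open_or HY OU' OV') KUV.
have HCl : clopen OY C by case: PC.
have HD : clopen OY (fun y => C y /\ U' y).
  split; first exact: (open_and HY (proj1 HCl) OU').
  apply: (open_ext (open_or HY (proj2 HCl) OV')) => y. split.
  - case=> [nC|V'y]; [tauto|]. move=> [_ U'y]. exact: (D' y).
  - move=> h. case: (classic (C y)) => Cy; [|by left].
    right. case: (HC y Cy) => // U'y. exfalso; tauto.
case: (Pin_compl p HD) => PD.
- have [Cy U'y] := K2 _ PD. have : V' y2.
    apply: BV'. split => // Uy. exact: (disj y2 K2 Uy V2).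
  move=> V'y. exact: (D' y2).
- have [Cy nD] := K1 _ (Pin_and PC PD). have : U' y1.
    apply: AU'. split => // Vy. exact: (disj y1 K1 U1 Vy).
  move=> U'y. tauto.
Qed.

Lemma K_single p y z : K p y -> K p z -> y = z.
Proof. move=> Ky Kz. have := HYt (@K_conn p). move=> H. exact: H. Qed.

Definition gmap (p : B) : Y := proj1_sig (constructive_indefinite_description _ (K_ne p)).
Lemma gK p : K p (gmap p).
Proof. exact: (proj2_sig (constructive_indefinite_description _ (K_ne p))). Qed.

Lemma g_iota x : gmap (iota OX a Ha x) = f x.
Proof.
apply: (@K_single (iota OX a Ha x) _ _ (@gK (iota OX a Ha x))). move=> V [HV e]. apply: NNPP => nV.
rewrite /= piece_out // (a0 Ha) in e. lra.
Qed.

Lemma g_cont : t_continuous TB OY gmap.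
Proof.
move=> W OW. apply: TB_local => p Wp.
have [C [PC HC]] := Pin_in_open OW (fun y Ky => eq_ind _ W Wp _ (@K_single p _ _ (@gK p) Ky)).
case: PC => HV e.
exists (fun q : B => 1/2 < proj1_sig q (ind HX Ha (pre_clopen HV))). split; first exact: TB_gt.
split; first lra.
move=> q hq. apply: HC. apply: gK. exists HV.
case: (nu_ind01 HX Ha q (pre_clopen HV)) => // e0. lra.
Qed.

Lemma g_unique (g' : B -> Y) : t_continuous TB OY g' ->
  (forall x, f x = g' (iota OX a Ha x)) -> forall p, g' p = gmap p.
Proof.
move=> cg' Hg' p. apply: NNPP => ne. have [U [V [OU [OV [Up [Vp D]]]]]] := HYh ne.
have h1 := cg' U OU. have h2 : TB (fun q => V (gmap q)) by apply: g_cont.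
have ON : TB (fun q => U (g' q) /\ V (gmap q)) := open_and (@TB_top _ OX _ a) h1 h2.
have [q [[Uq Vq] [x ex]]] := TB_dense HX Ha ON (ex_intro _ p (conj Up Vp)).
subst q. rewrite g_iota -Hg' in Uq Vq. exact: (D (f x)).
Qed.

Lemma univ : exists g : B -> Y,
  t_continuous TB OY g /\ (forall x, f x = g (iota OX a Ha x)) /\
  (forall g' : B -> Y, t_continuous TB OY g' ->
     (forall x, f x = g' (iota OX a Ha x)) -> forall p, g' p = g p).
Proof.
exists gmap. split; first exact: g_cont. split; last exact: g_unique.
move=> x. by rewrite g_iota.
Qed.
End Univ.

Lemma cont_comp (A B C : Type) (OA : (A -> Prop) -> Prop) (OB : (B -> Prop) -> Prop)
  (OC : (C -> Prop) -> Prop) (f : A -> B) (g : B -> C) :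
  t_continuous OA OB f -> t_continuous OB OC g -> t_continuous OA OC (fun x => g (f x)).
Proof. move=> hf hg V HV. exact: (hf _ (hg _ HV)). Qed.

Lemma cont_id (A : Type) (OA : (A -> Prop) -> Prop) : t_continuous OA OA (fun x => x).
Proof. by move=> V HV. Qed.

Lemma homeo_part (X : Type) (OX : (X -> Prop) -> Prop) (HX : t_is_topology OX)
  (k : fieldType) (a : k -> R) (Ha : nonarch_abs a)
  (k' : fieldType) (a' : k' -> R) (Ha' : nonarch_abs a') :
  exists h : BSC OX a -> BSC OX a',
    t_homeomorphism (BSC_open OX a) (BSC_open OX a') h /\
    forall x, h (iota OX a Ha x) = iota OX a' Ha' x.
Proof.
have [h [hc [hi _]]] := univ HX Ha (TB_top OX a') (@TB_compact _ OX _ a') (TB_haus HX Ha')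
   (TB_td HX Ha') (iota_cont HX Ha').
have [h' [hc' [hi' _]]] := univ HX Ha' (TB_top OX a) (@TB_compact _ OX _ a) (TB_haus HX Ha)
   (TB_td HX Ha) (iota_cont HX Ha).
have [g0 [_ [_ gu]]] := univ HX Ha (TB_top OX a) (@TB_compact _ OX _ a) (TB_haus HX Ha)
   (TB_td HX Ha) (iota_cont HX Ha).
have [g1 [_ [_ gu']]] := univ HX Ha' (TB_top OX a') (@TB_compact _ OX _ a') (TB_haus HX Ha')
   (TB_td HX Ha') (iota_cont HX Ha').
exists h. split; last by move=> x; rewrite -hi.
exists h'. split; first exact: hc. split; first exact: hc'. split.
- move=> p.
  have c1 : forall x, iota OX a Ha x = h' (h (iota OX a Ha x)) by move=> x; rewrite -hi -hi'.
  have e1 := gu (fun p => h' (h p)) (cont_comp hc hc') c1 p.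
  have e2 := gu (fun p => p) (@cont_id _ _) (fun x => erefl) p.
  exact: (eq_trans e1 (esym e2)).
- move=> p.
  have c1 : forall x, iota OX a' Ha' x = h (h' (iota OX a' Ha' x)) by move=> x; rewrite -hi' -hi.
  have e1 := gu' (fun p => h (h' p)) (cont_comp hc' hc) c1 p.
  have e2 := gu' (fun p => p) (@cont_id _ _) (fun x => erefl) p.
  exact: (eq_trans e1 (esym e2)).
Qed.

Theorem mainTheorem2 (X : Type) (OX : (X -> Prop) -> Prop) (HX : t_is_topology OX)
  (k : fieldType) (a : k -> R) (Hk : complete_nonarch_field a) :
  let Ha := proj1 Hk in
  t_is_topology (BSC_open OX a) /\
  t_compact (BSC_open OX a) /\
  t_hausdorff (BSC_open OX a) /\
  t_totally_disconnected (BSC_open OX a) /\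
  t_continuous OX (BSC_open OX a) (iota OX a Ha) /\
  t_dense (BSC_open OX a) (fun p => exists x, p = iota OX a Ha x) /\
  (forall (Y : Type) (OY : (Y -> Prop) -> Prop),
     t_is_topology OY -> t_compact OY -> t_hausdorff OY -> t_totally_disconnected OY ->
     forall f : X -> Y, t_continuous OX OY f ->
       exists g : BSC OX a -> Y,
         t_continuous (BSC_open OX a) OY g /\ (forall x, f x = g (iota OX a Ha x)) /\
         (forall g' : BSC OX a -> Y, t_continuous (BSC_open OX a) OY g' ->
            (forall x, f x = g' (iota OX a Ha x)) -> forall p, g' p = g p)) /\
  (forall (k' : fieldType) (a' : k' -> R) (Hk' : complete_nonarch_field a'),
     exists h : BSC OX a -> BSC OX a',
       t_homeomorphism (BSC_open OX a) (BSC_open OX a') h /\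
       forall x, h (iota OX a Ha x) = iota OX a' (proj1 Hk') x).
Proof.
move=> Ha.
split; first exact: TB_top.
split; first exact: (@TB_compact _ OX _ a).
split; first exact: (TB_haus HX Ha).
split; first exact: (TB_td HX Ha).
split; first exact: (iota_cont HX Ha).
split; first exact: (TB_dense HX Ha).
split.
- move=> Y OY HY Hc Hh Ht f hf. exact: (univ HX Ha HY Hc Hh Ht hf).
- move=> k' a' Hk'. exact: (homeo_part HX Ha (proj1 Hk')).
Qed.
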